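(* Let $G$ be a subgroup of $\mathrm{GL}(d,\mathbb{R})$ and let $f\in\mathbb{R}[x_1,\dots,x_d]$ be a nonzero ordinary polynomial of total degree $n$. Then $R_G(f)$ is finite-dimensional and $$\sqrt[d]{\dim R_G(f)}-1\le n\le\dim R_G(f)-1.$$ Moreover, if $\dim R_G(f)=\binom{n+d}{d}$, then $n\le\sqrt[d]{d!\,\dim R_G(f)}-1$.
   Context: For $g\in C(\mathbb{R}^d)$, $h\in\mathbb{R}^d$, $P\in\mathrm{GL}(d,\mathbb{R})$: $\tau_hg(x)=g(x+h)$ and $O_Pg(x)=g(Px)$. $R_G(f)$ denotes the smallest vector subspace of $C(\mathbb{R}^d)$ containing $f$ and invariant under all $\tau_h$ ($h\in\mathbb{R}^d$) and all $O_P$ ($P\in G$). *)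

(* Defs.v *)
From HB Require Import structures.
From mathcomp Require Import all_boot all_order all_algebra.
From mathcomp Require Import all_classical all_reals all_analysis.
From mathcomp Require mpoly.
Import (canonicals, coercions, hints) mpoly.
Set Implicit Arguments. Unset Strict Implicit. Unset Printing Implicit Defensive.
Import Order.TTheory GRing.Theory Num.Theory.
Import numFieldTopology.Exports numFieldNormedType.Exports.
Local Open Scope classical_set_scope.
Local Open Scope ring_scope.

(* Points of R^d are column vectors 'cV[R]_d, so that P x is P *m x. *)

Definition is_GL_subgroup (R : realType) (d : nat) (G : set 'M[R]_d) : Prop :=
  [/\ G 1%:M,
      (forall P, G P -> P \in unitmx),
      (forall P Q, G P -> G Q -> G (P *m Q)) &
      (forall P, G P -> G (invmx P))].

Definition tau (R : realType) (d : nat) (h : 'cV[R]_d) (g : 'cV[R]_d -> R) :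
  'cV[R]_d -> R := fun x => g (x + h).

Definition Op (R : realType) (d : nat) (P : 'M[R]_d) (g : 'cV[R]_d -> R) :
  'cV[R]_d -> R := fun x => g (P *m x).

Definition is_subspace_C (R : realType) (d : nat) (S : set ('cV[R]_d -> R)) :=
  [/\ (forall g, S g -> continuous g),
      S (fun _ => 0),
      (forall g1 g2, S g1 -> S g2 -> S (fun x => g1 x + g2 x)) &
      (forall (a : R) g, S g -> S (fun x => a * g x))].

(* R_G(f): the smallest vector subspace of C(R^d) containing f and invariant
   under all tau_h and all O_P (P in G): the intersection of all such. *)
Definition RG (R : realType) (d : nat) (G : set 'M[R]_d) (f : 'cV[R]_d -> R) :
  set ('cV[R]_d -> R) :=
  [set g | forall S : set ('cV[R]_d -> R),
      is_subspace_C S -> S f ->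
      (forall h g', S g' -> S (tau h g')) ->
      (forall P g', G P -> S g' -> S (Op P g')) ->
      S g].

Definition has_dim (R : realType) (T : Type) (S : set (T -> R)) (D : nat) :=
  exists b : 'I_D -> (T -> R),
    [/\ (forall i, S (b i)),
        (forall c : 'I_D -> R, (forall x, \sum_(i < D) c i * b i x = 0) ->
            forall i, c i = 0) &
        (forall g, S g -> exists c : 'I_D -> R,
            forall x, g x = \sum_(i < D) c i * b i x)].

Definition polyfun (R : realType) (d : nat) (p : mpoly.mpoly d R) :
  'cV[R]_d -> R := fun x => mpoly.meval (fun i => x i ord0) p.

(* Main.v *)
Require Import Defs.
From HB Require Import structures.
From mathcomp Require Import all_boot all_order all_algebra.
From mathcomp Require Import all_classical all_reals all_analysis.
From mathcomp Require Import zify.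
From mathcomp Require mpoly.
Import (canonicals, coercions, hints) mpoly.
Import Order.TTheory GRing.Theory Num.Theory.
Import numFieldTopology.Exports numFieldNormedType.Exports.
Local Open Scope ring_scope.


Section Arith.
Variable R : realType.

Lemma powR_root (b : R) (d : nat) : (0 < d)%N -> 0 <= b ->
  (b ^+ d) `^ (d%:R)^-1 = b.
Proof.
move=> d0 b0; rewrite -powR_mulrn // -powRrM mulfV ?powRr1 //.
by rewrite pnatr_eq0 -lt0n.
Qed.

Lemma root_le (a b : R) (d : nat) : (0 < d)%N -> 0 <= a -> 0 <= b ->
  a <= b ^+ d -> a `^ (d%:R)^-1 <= b.
Proof.
move=> d0 a0 b0 ab; rewrite -[X in _ <= X](powR_root _ _ d0 b0).
apply: ge0_ler_powR => //. all: try by rewrite nnegrE. all: try by rewrite nnegrE exprn_ge0.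

Qed.

Lemma le_root (a b : R) (d : nat) : (0 < d)%N -> 0 <= a -> 0 <= b ->
  b ^+ d <= a -> b <= a `^ (d%:R)^-1.
Proof.
move=> d0 a0 b0 ab; rewrite -[X in X <= _](powR_root _ _ d0 b0).
apply: ge0_ler_powR => //. all: try by rewrite nnegrE. all: try by rewrite nnegrE exprn_ge0.

Qed.
End Arith.

Lemma ffact_ge (n d : nat) : ((n.+1) ^ d <= (n + d) ^_ d)%N.
Proof.
elim: d => [|d IH]; first by rewrite expn0 ffactn0.
rewrite addnS ffactSS expnS leq_mul //; first by rewrite ltnS leq_addr.
Qed.

Lemma binom_ge (n d : nat) : ((n.+1) ^ d <= d`! * 'C(n + d, d))%N.
Proof. by rewrite mulnC bin_ffact ffact_ge. Qed.


Section LinAlg.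
Variables (R : realType) (T : Type).

Definition indep k (b : 'I_k -> T -> R) :=
  forall c : 'I_k -> R, (forall x, \sum_(i < k) c i * b i x = 0) ->
    forall i, c i = 0.
Arguments indep {k}.

Lemma rank_bound N k (e : 'I_N -> T -> R) (b : 'I_k -> T -> R) :
  (forall i, exists a : 'I_N -> R, forall x, b i x = \sum_(j < N) a j * e j x) ->
  indep b -> (k <= N)%N.
Proof.
move=> hb ind; have [A hA] := boolp.choice hb.
rewrite leqNgt; apply/negP => ltNk.
pose M : 'M[R]_(k, N) := \matrix_(i, j) A i j.
have nf : ~~ row_free M.
  rewrite /row_free; apply/negP => /eqP rk.
  by have := rank_leq_col M; rewrite rk leqNgt ltNk.
rewrite -kermx_eq0 in nf.
have [i ri] : exists i, row i (kermx M) != 0.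
  apply/boolp.not_existsP => allz; move/negP: nf; apply.
  apply/eqP/row_matrixP => i; rewrite row0.
  by apply/eqP/negPn/negP => /(allz i).
pose c := row i (kermx M).
have cM : c *m M = 0 by rewrite /c -row_mul mulmx_ker row0.
have cz : forall l, c ord0 l = 0.
  apply: ind => x.
  under eq_bigr => l _ do rewrite hA big_distrr /=.
  rewrite exchange_big /= big1 // => j _.
  under eq_bigr => l _ do rewrite mulrA.
  rewrite -big_distrl /=.
  have -> : \sum_(l < k) c ord0 l * A l j = (c *m M) ord0 j.
    by rewrite !mxE; apply: eq_bigr => l _; rewrite !mxE.
  by rewrite cM mxE mul0r.
move/negP: ri; apply; apply/eqP/rowP => l.
by rewrite mxE; have := cz l; rewrite /c !mxE.
Qed.

Lemma dim_exists (S : set (T -> R)) N (e : 'I_N -> T -> R) :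
  (forall g, S g -> exists a : 'I_N -> R, forall x, g x = \sum_(j < N) a j * e j x) ->
  exists D, has_dim S D /\
    (forall k (b : 'I_k -> T -> R), (forall i, S (b i)) -> indep b -> (k <= D)%N).
Proof.
move=> hS.
pose P k := exists b : 'I_k -> T -> R, (forall i, S (b i)) /\ indep b.
have P0 : P 0%N.
  exists (fun i => fun _ => 0); split => [[]//|c _ []//].
have Pb : forall k, P k -> (k <= N)%N.
  move=> k [b [Sb ib]]; apply: rank_bound ib => i; exact: hS.
have exP : exists k, P k by exists 0%N.
pose Pb' := (fun k => asbool (P k)).
have exP' : exists k, Pb' k by exists 0%N; apply/asboolP.
have bnd : forall k, Pb' k -> (k <= N)%N by move=> k /asboolP; exact: Pb.
case: (ex_maxnP exP' bnd) => D /asboolP [b [Sb ib]] maxD.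
exists D; split; last first.
  by move=> k b' Sb' ib'; apply: maxD; apply/asboolP; exists b'.
exists b; split => // g Sg.
pose b' : 'I_D.+1 -> T -> R :=
  fun i => if insub (val i) is Some j then b j else g.
have b'w : forall j : 'I_D, b' (widen_ord (leqnSn D) j) = b j.
  by move=> j; rewrite /b' /= valK.
have b'm : b' ord_max = g by rewrite /b' /= insubF // ltnn.
have nP : ~ P D.+1.
  move=> PD1; have := maxD _ (introT (asboolP _) PD1); by rewrite ltnn.
have [c [hc [i ci]]] : exists c : 'I_D.+1 -> R,
    (forall x, \sum_(i < D.+1) c i * b' i x = 0) /\ exists i, c i != 0.
  apply: boolp.contrapT => H; apply: nP; exists b'; split.
    move=> i; rewrite /b'; case: insub => [j|]; [exact: Sb|exact: Sg].
  move=> c hc i; apply: boolp.contrapT => ci; apply: H; exists c; split => //.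
  by exists i; apply/eqP.
have cm : c ord_max != 0.
  apply/negP => /eqP cm0; move/negP: ci; apply; apply/eqP.
  have cw : forall j : 'I_D, c (widen_ord (leqnSn D) j) = 0.
    apply: ib => x; apply: etrans (hc x); rewrite big_ord_recr /= cm0 mul0r addr0.
    by apply: eq_bigr => j _; rewrite b'w.
  have [j ->|] := unliftP ord_max i; last by move=> ->.
  have -> : lift ord_max j = widen_ord (leqnSn D) j by apply/val_inj; rewrite /= /bump leqNgt ltn_ord.
  exact: cw.
exists (fun j => - (c (widen_ord (leqnSn D) j)) / c ord_max) => x.
have := hc x; rewrite big_ord_recr /= b'm => /eqP; rewrite addr_eq0 => /eqP h.
apply: (mulfI cm); rewrite big_distrr /=.
rewrite (eq_bigr (fun j => - (c (widen_ord (leqnSn D) j) * b' (widen_ord (leqnSn D) j) x))); last first.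
  by move=> j _; rewrite b'w mulrA mulrCA mulfV // mulr1 mulNr.
by rewrite sumrN h opprK.
Qed.
End LinAlg.


Section Univ.
Variable R : realType.
Implicit Types p q : {poly R}.

Lemma poly_ext_eval p q : (forall x, p.[x] = q.[x]) -> p = q.
Proof.
move=> h; apply/eqP; rewrite -subr_eq0; apply/negP => /negP nz.
pose rs := [seq (i%:R : R) | i <- iota 0 (size (p - q))].
have H1 : all (root (p - q)) rs.
  by apply/allP => x _; rewrite rootE hornerD hornerN h subrr.
have H2 : uniq rs.
  by rewrite map_inj_uniq ?iota_uniq // => i j /eqP; rewrite eqr_nat => /eqP.
by have := max_poly_roots nz H1 H2; rewrite size_map size_iota ltnn.
Qed.

Definition Tp p := \sum_(1 <= i < size p) p^`N(i).

Lemma Tp_horner p x : (Tp p).[x] = p.[x + 1] - p.[x].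
Proof.
rewrite (nderiv_taylor _ (commr1 x)) /Tp horner_sum.
under [X in _ = X - _]eq_bigr do rewrite expr1n mulr1.
have [->|pn0] := eqVneq p 0.
  by rewrite size_poly0 !big_geq // ?big_ord0 horner0 subrr.
rewrite -(big_mkord xpredT (fun i => p^`N(i).[x])).
rewrite big_ltn ?size_poly_gt0 //.
by rewrite nderivn0 addrC addKr.
Qed.

Lemma Tp_coef p j : (Tp p)`_j = \sum_(1 <= i < size p) p`_(i + j) *+ 'C(i + j, i).
Proof. by rewrite /Tp coef_sum; apply: eq_bigr => i _; rewrite coef_nderivn. Qed.

Lemma size_Tp p : size (Tp p) = (size p).-1.
Proof.
case sp: (size p) => [|m] /=.
  by rewrite /Tp sp big_geq ?size_poly0.
case: m sp => [|m] sp.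
  by rewrite /Tp sp big_geq ?size_poly0.
apply/eqP; rewrite eqn_leq; apply/andP; split.
  apply/leq_sizeP => j hj; rewrite Tp_coef big1_seq // => i /andP [_].
  rewrite mem_iota => /andP [i1 _]; rewrite nth_default ?mul0rn // sp.
  by rewrite -add1n leq_add.
have : (Tp p)`_m != 0.
  rewrite Tp_coef sp big_ltn // big1_seq ?addr0.
    rewrite add1n bin1 mulrn_eq0 negb_or /=.
    have := lead_coef_eq0 p; rewrite lead_coefE sp /= => ->.
    by rewrite -size_poly_eq0 sp.
  move=> i /andP [_]; rewrite mem_iota => /andP [i2 _].
  rewrite nth_default ?mul0rn // sp.
  by rewrite -[m.+2]addn2 addnC leq_add.
by apply: contraR; rewrite -leqNgt => /leq_sizeP ->.
Qed.

Lemma size_iterTp k p : size (iter k Tp p) = (size p - k)%N.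
Proof. by elim: k => [|k IH]; rewrite ?subn0 //= size_Tp IH subnS. Qed.

Lemma tri_indep n (ps : nat -> {poly R}) :
  (forall k, (k <= n)%N -> size (ps k) = (n.+1 - k)%N) ->
  forall c : 'I_n.+1 -> R, \sum_(k < n.+1) c k *: ps k = 0 -> forall k, c k = 0.
Proof.
move=> hs c hc.
suff : forall m (k : 'I_n.+1), (k < m)%N -> c k = 0.
  by move=> H k; apply: (H k.+1).
elim=> [|m IH] k //; rewrite ltnS leq_eqVlt => /orP [/eqP km|]; last exact: IH.
have := congr1 (fun q : {poly R} => q`_(n - k)) hc.
rewrite coef_sum coef0 (bigD1 k) //= big1 ?addr0.
  rewrite coefZ => /eqP; rewrite mulf_eq0 => /orP [/eqP //|].
  have := hs k (ltn_ord k); rewrite (@subSn k n (ltn_ord k)) => sk.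
  have : lead_coef (ps k) != 0.
    by rewrite lead_coef_eq0 -size_poly_eq0 sk.
  by rewrite lead_coefE sk /= => /negPf ->.
move=> j jk; rewrite coefZ.
case: (ltngtP j k) => hjk.
- by rewrite IH ?mul0r // -km.
- rewrite nth_default ?mulr0 // (hs j (ltn_ord j)).
  have := ltn_ord j; have := ltn_ord k; lia.
- by move/negP: jk; case; apply/eqP/val_inj.
Qed.
End Univ.


Notation mX RR mm := (@mpoly.mpolyX _ RR mm).

Section MP.
Variable R : realType.

Lemma msizeM_le' n (p q : mpoly.mpoly n R) :
  (mpoly.msize (p * q) <= (mpoly.msize p + mpoly.msize q).-1)%N.
Proof.
have [->|nz_p ] := eqVneq p 0; first by rewrite mul0r mpoly.msize0.
have [->|nz_q ] := eqVneq q 0; first by rewrite mulr0 mpoly.msize0.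
have [->|nz_pq] := eqVneq (p * q) 0; first by rewrite mpoly.msize0.
rewrite -!mpoly.mlead_deg // addSn addnS /= ltnS.
by have /mpoly.lemc_mdeg := mpoly.mleadM_le p q; rewrite mpoly.mdegD.
Qed.
Arguments msizeM_le' {n}.

Lemma msize_expr n (q : mpoly.mpoly n R) e :
  (mpoly.msize q <= 2)%N -> (mpoly.msize (q ^+ e) <= e.+1)%N.
Proof.
move=> hq; elim: e => [|e IH]; first by rewrite expr0 mpoly.msize1.
rewrite exprS; apply: leq_trans (msizeM_le' _ _) _.
have := leq_add hq IH; lia.
Qed.
Arguments msize_expr {n}.

Lemma msize_prod n k (q : 'I_k -> mpoly.mpoly n R) (e : 'I_k -> nat) :
  (forall i, mpoly.msize (q i) <= 2)%N ->
  (mpoly.msize (\prod_(i < k) q i ^+ e i) <= (\sum_(i < k) e i).+1)%N.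
Proof.
move=> hq.
apply: (big_rec2 (fun a s => mpoly.msize a <= s.+1)%N); first by rewrite mpoly.msize1.
move=> i a s _ ha; apply: leq_trans (msizeM_le' _ _) _.
have := leq_add (msize_expr (q i) (e i) (hq i)) ha; lia.
Qed.

Lemma msize_comp k n (p : mpoly.mpoly k R) (lq : k.-tuple (mpoly.mpoly n R)) :
  (forall i, mpoly.msize (tnth lq i) <= 2)%N ->
  (mpoly.msize (mpoly.comp_mpoly lq p) <= mpoly.msize p)%N.
Proof.
move=> hq; rewrite mpoly.comp_mpolyEX.
apply: leq_trans (mpoly.msize_sum _ _ _) _.
apply/bigmax_leqP_seq => m hm _.
apply: leq_trans (mpoly.msizeZ_le _ _) _.
rewrite mpoly.comp_mpolyX.
apply: leq_trans (msize_prod _ _ _ _ hq) _.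
by rewrite -mpoly.mdegE; apply: mpoly.msize_mdeg_lt.
Qed.

Lemma polyfunE d (p : mpoly.mpoly d R) x :
  polyfun p x = \sum_(m <- mpoly.msupp p) mpoly.mcoeff m p * \prod_i (x i ord0) ^+ m i.
Proof. exact: mpoly.mevalE. Qed.

Lemma polyfunD d (p q : mpoly.mpoly d R) x : polyfun (p + q) x = polyfun p x + polyfun q x.
Proof. exact: mpoly.mevalD. Qed.
Lemma polyfunZ d (p : mpoly.mpoly d R) c x : polyfun (c *: p) x = c * polyfun p x.
Proof. exact: mpoly.mevalZ. Qed.
Lemma polyfun0 d x : polyfun (0 : mpoly.mpoly d R) x = 0.
Proof. exact: mpoly.meval0. Qed.

Definition lqT d (h : 'cV[R]_d) : d.-tuple (mpoly.mpoly d R) :=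
  [tuple (mX R (mpoly.mnm1 i) + mpoly.mpolyC d (h i ord0)) | i < d].
Definition lqO d (P : 'M[R]_d) : d.-tuple (mpoly.mpoly d R) :=
  [tuple \sum_(j < d) P i j *: mX R (mpoly.mnm1 j) | i < d].

Lemma msizeX1 d (i : 'I_d) : mpoly.msize (mX R (mpoly.mnm1 i)) = 2%N.
Proof. by rewrite mpoly.msizeX mpoly.mdeg1. Qed.

Lemma lqT_size d h i : (mpoly.msize (tnth (lqT d h) i) <= 2)%N.
Proof.
rewrite tnth_mktuple; apply: leq_trans (mpoly.msizeD_le _ _) _.
by rewrite geq_max msizeX1 mpoly.msizeC; case: (_ != 0).
Qed.

Lemma lqO_size d P i : (mpoly.msize (tnth (lqO d P) i) <= 2)%N.
Proof.
rewrite tnth_mktuple; apply: leq_trans (mpoly.msize_sum _ _ _) _.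
apply/bigmax_leqP_seq => j _ _; apply: leq_trans (mpoly.msizeZ_le _ _) _.
by rewrite msizeX1.
Qed.

Lemma polyfun_tau d (p : mpoly.mpoly d R) h x :
  polyfun p (x + h) = polyfun (mpoly.comp_mpoly (lqT d h) p) x.
Proof.
rewrite /polyfun mpoly.comp_mpoly_meval; apply: mpoly.meval_eq => i.
by rewrite tnth_mktuple mpoly.mevalD mpoly.mevalXU mpoly.mevalC !mxE.
Qed.

Lemma polyfun_Op d (p : mpoly.mpoly d R) P x :
  polyfun p (P *m x) = polyfun (mpoly.comp_mpoly (lqO d P) p) x.
Proof.
rewrite /polyfun mpoly.comp_mpoly_meval; apply: mpoly.meval_eq => i.
rewrite tnth_mktuple mxE raddf_sum; apply: eq_bigr => j _.
have -> : forall y : mpoly.mpoly d R, mpoly.mpoly_meval__canonical__Algebra_Additive (x^~ ord0) y = mpoly.meval (x^~ ord0) y by [].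
by rewrite mpoly.mevalZ mpoly.mevalXU.
Qed.

Lemma cont_sum (T : topologicalType) (I : Type) (s : seq I) (F : I -> T -> R) :
  (forall i, continuous (F i)) -> continuous (fun x => \sum_(i <- s) F i x).
Proof.
move=> hF; elim: s => [|a s IH].
  under eq_fun do rewrite big_nil; exact: cst_continuous.
under eq_fun do rewrite big_cons.
by move=> x; apply: (continuousD (hF a x) (IH x)).
Qed.

Lemma cont_prod (T : topologicalType) (I : Type) (s : seq I) (F : I -> T -> R) :
  (forall i, continuous (F i)) -> continuous (fun x => \prod_(i <- s) F i x).
Proof.
move=> hF; elim: s => [|a s IH].
  under eq_fun do rewrite big_nil; exact: cst_continuous.
under eq_fun do rewrite big_cons.
by move=> x; apply: (continuousM (hF a x) (IH x)).
Qed.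

Lemma cont_exp (T : topologicalType) (F : T -> R) k :
  continuous F -> continuous (fun x => F x ^+ k).
Proof.
move=> hF; elim: k => [|k IH].
  under eq_fun do rewrite expr0; exact: cst_continuous.
under eq_fun do rewrite exprS.
by move=> x; apply: (continuousM (hF x) (IH x)).
Qed.

Lemma polyfun_cont d (p : mpoly.mpoly d R) : continuous (polyfun p).
Proof.
have -> : polyfun p = fun x => \sum_(m <- mpoly.msupp p)
    mpoly.mcoeff m p * \prod_i (x i ord0) ^+ m i.
  by apply: funext => x; rewrite polyfunE.
apply: cont_sum => m x; apply: continuousM; first exact: cst_continuous.
apply: cont_prod => i; apply: cont_exp; exact: coord_continuous.
Qed.
End MP.
Section RGsec.
Variables (R : realType) (d : nat) (G : set 'M[R]_d).
Local Open Scope classical_set_scope.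

Definition Pn n := [set g : 'cV[R]_d -> R | exists p : mpoly.mpoly d R,
  (mpoly.msize p <= n.+1)%N /\ g = polyfun p].

Lemma Pn_subspace n : is_subspace_C (Pn n).
Proof.
split.
- by move=> g [p [_ ->]]; exact: polyfun_cont.
- exists 0; split; first by rewrite mpoly.msize0.
  by apply: funext => x; rewrite polyfun0.
- move=> g1 g2 [p [hp ->]] [q [hq ->]]; exists (p + q); split.
    by apply: leq_trans (mpoly.msizeD_le _ _) _; rewrite geq_max hp hq.
  by apply: funext => x; rewrite polyfunD.
- move=> a g [p [hp ->]]; exists (a *: p); split.
    exact: leq_trans (mpoly.msizeZ_le _ _) hp.
  by apply: funext => x; rewrite polyfunZ.
Qed.

Lemma RG_sub_Pn (f : mpoly.mpoly d R) n : (mpoly.msize f <= n.+1)%N ->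
  RG G (polyfun f) `<=` Pn n.
Proof.
move=> hf g hg; apply: hg.
- exact: Pn_subspace.
- by exists f.
- move=> h g' [p [hp ->]]; exists (mpoly.comp_mpoly (lqT _ _ h) p); split.
    apply: leq_trans hp; apply: msize_comp => i; exact: lqT_size.
  by apply: funext => x; rewrite /tau polyfun_tau.
- move=> P g' _ [p [hp ->]]; exists (mpoly.comp_mpoly (lqO _ _ P) p); split.
    apply: leq_trans hp; apply: msize_comp => i; exact: lqO_size.
  by apply: funext => x; rewrite /Op polyfun_Op.
Qed.

Lemma RG_f (g : 'cV[R]_d -> R) : RG G g g.
Proof. by rewrite /RG /= => S _ Sg. Qed.

Lemma RG_tau g0 g h : RG G g0 g -> RG G g0 (tau h g).
Proof. by rewrite /RG /= => hg S hS Sf ht hO; exact: (ht _ _ (hg S hS Sf ht hO)). Qed.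

Lemma RG_add g0 g1 g2 : RG G g0 g1 -> RG G g0 g2 -> RG G g0 (fun x => g1 x + g2 x).
Proof.
rewrite /RG /= => h1 h2 S hS Sf ht hO.
have [_ _ hadd _] := hS.
exact: (hadd _ _ (h1 S hS Sf ht hO) (h2 S hS Sf ht hO)).
Qed.

Lemma RG_scale g0 g a : RG G g0 g -> RG G g0 (fun x => a * g x).
Proof.
rewrite /RG /= => h1 S hS Sf ht hO.
have [_ _ _ hsc] := hS.
exact: (hsc _ _ (h1 S hS Sf ht hO)).
Qed.

Definition Nmon n := #|{ffun 'I_d -> 'I_n.+1}|.
Definition emon n (j : 'I_(Nmon n)) (x : 'cV[R]_d) : R :=
  \prod_i (x i ord0) ^+ (enum_val j i).
Arguments emon {n}.

Lemma Nmon_card n : Nmon n = (n.+1 ^ d)%N.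
Proof. by rewrite /Nmon card_ffun !card_ord. Qed.

Lemma Pn_span n g : Pn n g ->
  exists a : 'I_(Nmon n) -> R, forall x, g x = \sum_(j < Nmon n) a j * emon j x.
Proof.
move=> [p [hp ->]].
pose gam (m : mpoly.multinom d) : {ffun 'I_d -> 'I_n.+1} := [ffun i => inord (m i)].
exists (fun j => \sum_(m <- mpoly.msupp p | gam m == enum_val j) mpoly.mcoeff m p) => x.
rewrite polyfunE.
under [RHS]eq_bigr do rewrite big_distrl big_mkcond /=.
rewrite exchange_big /= [LHS]big_seq [RHS]big_seq; apply: eq_bigr => m hm.
rewrite (bigD1 (enum_rank (gam m))) //= enum_rankK eqxx.
rewrite [X in _ = _ + X]big1 ?addr0; last first.
  move=> j hj; case: eqP => // e.
  by rewrite e enum_valK eqxx in hj.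
congr (_ * _); apply: eq_bigr => i _; congr (_ ^+ _).
rewrite enum_rankK /gam ffunE inordK //.
have h1 := mpoly.msize_mdeg_lt hm.
have h2 : (m i <= mpoly.mdeg m)%N by rewrite mpoly.mdegE (bigD1 i) //= leq_addr.
lia.
Qed.

End RGsec.


Section NV.
Variable R : realType.

Definition mtr n (m : mpoly.multinom n.+1) : mpoly.multinom n :=
  mpoly.Multinom [tuple m (widen_ord (leqnSn n) i) | i < n].
Arguments mtr {n}.

Lemma mtrE n (m : mpoly.multinom n.+1) j : mtr m j = m (widen_ord (leqnSn n) j).
Proof. by rewrite mpoly.mnm_tnth /= tnth_mktuple. Qed.

Lemma widen_lift n (j : 'I_n) : widen_ord (leqnSn n) j = lift ord_max j.
Proof. by apply/val_inj; rewrite /= /bump leqNgt ltn_ord. Qed.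

Lemma nonvanish n (p : mpoly.mpoly n R) : p != 0 ->
  exists v : 'I_n -> R, mpoly.meval v p != 0.
Proof.
elim: n p => [|n IH] p pn0.
  have hs : (mpoly.msize p <= 1)%N.
    rewrite mpoly.msizeE; apply/bigmax_leqP_seq => m _ _.
    by rewrite mpoly.mdegE big_ord0.
  have e := mpoly.msize1_polyC hs.
  exists (fun _ => 0); rewrite e mpoly.mevalC.
  by apply: contra pn0 => h; rewrite e mpoly.mpolyC_eq0.
pose m0 := mpoly.mlead p.
have hm0 : m0 \in mpoly.msupp p by exact: mpoly.mlead_supp.
pose k0 := m0 ord_max.
pose q := \sum_(m <- mpoly.msupp p | m ord_max == k0)
  mpoly.mcoeff m p *: mpoly.mpolyX R (mtr m).
have qn0 : q != 0.
  have : mpoly.mcoeff (mtr m0) q != 0.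
    rewrite /q raddf_sum /=.
    rewrite big_mkcond (bigD1_seq m0) ?mpoly.msupp_uniq //= eqxx.
    rewrite mpoly.mcoeffZ mpoly.mcoeffX eqxx mulr1 big1 ?addr0.
      by rewrite mpoly.mleadc_eq0.
    move=> m mm0; case: eqP => [mk|]; last by [].
    rewrite mpoly.mcoeffZ mpoly.mcoeffX.
    case: eqP => [e|]; last by rewrite mulr0.
    exfalso; move/negP: mm0; apply; apply/eqP/mpoly.mnmP => i.
    have [j ->|->] := unliftP ord_max i; last by rewrite mk.
    by rewrite -widen_lift -!mtrE e.
  by apply: contra => /eqP ->; rewrite mpoly.mcoeff0.
have [w hw] := IH q qn0.
pose W (m : mpoly.multinom n.+1) := \prod_(j < n) w j ^+ m (widen_ord (leqnSn n) j).
pose r : {poly R} := \sum_(m <- mpoly.msupp p) (mpoly.mcoeff m p * W m) *: 'X^(m ord_max).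
have rk0 : r`_k0 = mpoly.meval w q.
  rewrite /r coef_sum /q raddf_sum /= [RHS]big_mkcond /=; apply: eq_bigr => m _.
  rewrite coefZ coefXn eq_sym; case: eqP => _; last by rewrite mulr0.
  rewrite mulr1 mpoly.mevalZ mpoly.mevalX; congr (_ * _); apply: eq_bigr => j _.
  by rewrite mtrE.
have [t ht] : exists t, r.[t] != 0.
  apply: boolp.contrapT => H; move/negP: hw; apply; rewrite -rk0.
  have -> : r = 0.
    apply: poly_ext_eval => x; rewrite horner0.
    by apply: boolp.contrapT => hx; apply: H; exists x; apply/eqP.
  by rewrite coef0.
exists (fun i => if unlift ord_max i is Some j then w j else t).
rewrite mpoly.mevalE; apply: contra ht => /eqP <-.
rewrite /r horner_sum; apply/eqP; apply: eq_bigr => m _.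
rewrite hornerZ hornerXn big_ord_recr /= unlift_none -mulrA; congr (_ * (_ * _)).
by apply: eq_bigr => j _; rewrite widen_lift liftK.
Qed.
End NV.


Section Lower.
Variables (R : realType) (d : nat) (G : set 'M[R]_d) (f : mpoly.mpoly d R) (n : nat).
Hypothesis fsize : mpoly.msize f = n.+1.

Definition ftop := \sum_(m <- mpoly.msupp f | mpoly.mdeg m == n)
  mpoly.mcoeff m f *: mpoly.mpolyX R m.

Lemma ftop_neq0 : ftop != 0.
Proof.
have fn0 : f != 0 by rewrite -mpoly.msize_poly_eq0 fsize.
pose m0 := mpoly.mlead f.
have hm0 : m0 \in mpoly.msupp f by exact: mpoly.mlead_supp.
have dm0 : mpoly.mdeg m0 = n.
  by have := mpoly.mlead_deg fn0; rewrite fsize => -[].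
have : mpoly.mcoeff m0 ftop != 0.
  rewrite /ftop raddf_sum /= big_mkcond (bigD1_seq m0) ?mpoly.msupp_uniq //= dm0 eqxx.
  rewrite mpoly.mcoeffZ mpoly.mcoeffX eqxx mulr1 big1 ?addr0.
    by rewrite mpoly.mleadc_eq0.
  move=> m mm0; case: eqP => [mk|]; last by [].
  rewrite mpoly.mcoeffZ mpoly.mcoeffX.
  by case: eqP => [e|]; [move/negP: mm0; rewrite e eqxx|rewrite mulr0].
by apply: contra => /eqP ->; rewrite mpoly.mcoeff0.
Qed.

Variable v : 'I_d -> R.
Hypothesis hv : mpoly.meval v ftop != 0.

Definition phi : {poly R} := \sum_(m <- mpoly.msupp f)
  (mpoly.mcoeff m f * \prod_i v i ^+ m i) *: 'X^(mpoly.mdeg m).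
Definition vc : 'cV[R]_d := \col_i v i.

Lemma phi_horner s : phi.[s] = polyfun f (s *: vc).
Proof.
rewrite /phi horner_sum polyfunE; apply: eq_bigr => m _.
rewrite hornerZ hornerXn -mulrA; congr (_ * _).
rewrite mpoly.mdegE -prodrXr -big_split /=; apply: eq_bigr => i _.
by rewrite !mxE exprMn mulrC.
Qed.

Lemma phi_coef j : phi`_j = \sum_(m <- mpoly.msupp f | mpoly.mdeg m == j)
  mpoly.mcoeff m f * \prod_i v i ^+ m i.
Proof.
rewrite /phi coef_sum [RHS]big_mkcond; apply: eq_bigr => m _.
by rewrite coefZ coefXn eq_sym; case: eqP => _; rewrite ?mulr1 ?mulr0.
Qed.

Lemma size_phi : size phi = n.+1.
Proof.
apply/eqP; rewrite eqn_leq; apply/andP; split.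
  apply/leq_sizeP => j hj; rewrite phi_coef big1_seq // => m /andP [/eqP dm hm].
  by have := mpoly.msize_mdeg_lt hm; rewrite fsize dm ltnS leqNgt hj.
have : phi`_n != 0.
  rewrite phi_coef; apply: contra hv => /eqP <-.
  rewrite /ftop raddf_sum /=; apply/eqP; apply: eq_bigr => m _.
  by rewrite mpoly.mevalZ mpoly.mevalX.
by apply: contraR; rewrite -leqNgt => /leq_sizeP ->.
Qed.

Fixpoint gk (k : nat) : 'cV[R]_d -> R :=
  match k with
  | 0 => polyfun f
  | k.+1 => fun x => tau vc (gk k) x + (-1) * gk k x
  end.

Lemma gk_RG k : RG G (polyfun f) (gk k).
Proof.
elim: k => [|k IH] /=; first exact: RG_f.
by apply: RG_add; [apply: RG_tau|apply: RG_scale].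
Qed.

Lemma gk_line k s : gk k (s *: vc) = (iter k (@Tp R) phi).[s].
Proof.
elim: k s => [|k IH] s /=; first by rewrite phi_horner.
rewrite Tp_horner -IH /tau -IH mulN1r.
by rewrite scalerDl scale1r.
Qed.

Lemma gk_indep : @indep R 'cV[R]_d n.+1 (fun k : 'I_n.+1 => gk k).
Proof.
move=> c hc.
have H : \sum_(k < n.+1) c k *: iter k (@Tp R) phi = 0.
  apply: poly_ext_eval => s; rewrite horner0 horner_sum; apply: etrans (hc (s *: vc)).
  by apply: eq_bigr => k _; rewrite hornerZ gk_line.
have hs : forall k, (k <= n)%N -> size (iter k (@Tp R) phi) = (n.+1 - k)%N.
  by move=> k _; rewrite size_iterTp size_phi.
exact: (@tri_indep R n _ hs c H).
Qed.
End Lower.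

Theorem mainTheorem8 (R : realType) (d : nat) (G : set 'M[R]_d)
    (f : mpoly.mpoly d R) (n : nat) :
  (0 < d)%N -> is_GL_subgroup G -> f != 0 -> mpoly.msize f = n.+1 ->
  exists D : nat,
    [/\ has_dim (RG G (polyfun f)) D,
        (D%:R `^ (d%:R)^-1 - 1 <= n%:R :> R),
        (n%:R <= D%:R - 1 :> R) &
        (D = 'C(n + d, d) ->
           n%:R <= ((d`!)%:R * D%:R) `^ (d%:R)^-1 - 1 :> R)].
Proof.
move=> d0 _ fn0 fsize.
have span : forall g, RG G (polyfun f) g ->
    exists a : 'I_(Nmon d n) -> R, forall x, g x = \sum_(j < Nmon d n) a j * emon R d n j x.
  move=> g hg; apply: (Pn_span R d n g); apply: (RG_sub_Pn R d G f n) => //.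
  by rewrite fsize.
have [D [hD maxD]] := dim_exists R _ _ _ _ span.
have lowD : (n.+1 <= D)%N.
  have [v hv] := nonvanish R d (ftop R d f n) (ftop_neq0 R d f n fsize).
  apply: (maxD _ (fun k : 'I_n.+1 => gk R d f v k)).
    by move=> i; apply: gk_RG.
  exact: (gk_indep R d f n fsize v hv).
have upD : (D <= n.+1 ^ d)%N.
  have [b [Sb ib _]] := hD.
  rewrite -(Nmon_card d n); apply: (rank_bound R _ _ _ (emon R d n) b) => // i.
  exact: span.
exists D; split => //.
- rewrite lerBlDr; apply: root_le => //.
  by rewrite natr1 -natrX ler_nat.
- by rewrite lerBrDr natr1 ler_nat.
- move=> DC; rewrite lerBrDr; apply: le_root => //. all: try by rewrite ?mulr_ge0 ?ler0n ?addr_ge0.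
  by rewrite natr1 -natrX -natrM ler_nat DC binom_ge.
Qed.
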